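(* Let $n\ge3$, $d=\phi(n)/2$, $G=\mathrm{Gal}(\mathbf Q(\mu_n)|\mathbf Q)$, $c\in G$ complex conjugation, and let $\Phi=\{\Phi_1,\dots,\Phi_d\}\subseteq G$ be a C.M. type (so $G=\Phi\sqcup c\Phi$). Let $f:G\to\mathbf C$ be odd, i.e. $f(c\circ x)=-f(x)$ for all $x$, and let $M_f$ be the $d\times d$ matrix $[f(\Phi_k^{-1}\circ\Phi_l)]_{l,k}$. If $\langle\chi,f\rangle\neq0$ for all odd characters $\chi$ of $G$, then $M_f$ is invertible and the solution of $M_f\vec X=\vec Y$, $\vec X=(X_1,\dots,X_d)$, $\vec Y=(Y_1,\dots,Y_d)$, is $$X_j=\sum_{\chi\ \mathrm{odd}}\frac{\chi(\Phi_j)\sum_l\overline\chi(\Phi_l)Y_l}{d^2\langle f,\chi\rangle}.$$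
   Context: $\langle a,b\rangle=\frac1{\#G}\sum_{g\in G}a(g)\overline{b(g)}$. A character $\chi$ of $G$ is odd if $\chi(c)=-1$. *)

(* Defs.v *)
From HB Require Import structures.
From mathcomp Require Import all_boot all_order all_algebra all_fingroup all_solvable all_field all_character.
Set Implicit Arguments. Unset Strict Implicit. Unset Printing Implicit Defensive.
Import GRing.Theory Num.Theory.
Local Open Scope ring_scope.

(* G = Gal(Q(mu_n)|Q) identified with (Z/nZ)^x via sigma_a(zeta) = zeta^a. *)
Definition Gal_cyc (n : nat) : finGroupType := {unit 'Z_n}.

(* complex conjugation = sigma_{-1} *)
Definition cconj (n : nat) : Gal_cyc n := @FinRing.Unit ('Z_n) (-1) (unitrN1 ('Z_n)).

Definition dotG (gT : finGroupType) (a b : gT -> algC) : algC :=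
  (#|gT|%:R)^-1 * \sum_(g : gT) a g * (b g)^*.

Definition CM_type (gT : finGroupType) (c : gT) (d : nat) (Phi : 'I_d -> gT) : Prop :=
  injective Phi /\ (forall k l, (c * Phi k)%g != Phi l) /\
  (forall x : gT, exists k, x = Phi k \/ x = (c * Phi k)%g).

Definition odd_fun (gT : finGroupType) (c : gT) (f : gT -> algC) : Prop :=
  forall x, f (c * x)%g = - f x.

Definition Mf (gT : finGroupType) (d : nat) (Phi : 'I_d -> gT) (f : gT -> algC)
  : 'M[algC]_d := \matrix_(l < d, k < d) f ((Phi k)^-1 * Phi l)%g.

(* Main.v *)
Require Import Defs.
From HB Require Import structures.
From mathcomp Require Import all_boot all_order all_algebra all_fingroup all_solvable all_field all_character.
From mathcomp Require Import ring.
Import GRing.Theory Num.Theory.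
Local Open Scope ring_scope.

Section S.
Variables (gT : finGroupType) (c : gT) (d : nat) (Phi : 'I_d -> gT).
Hypothesis hPhi : CM_type c Phi.

Lemma sumCM (h : gT -> algC) :
  \sum_x h x = \sum_k h (Phi k) + \sum_k h (c * Phi k)%g.
Proof.
case: hPhi => inj [ndisj cov].
set A := [set Phi k | k in 'I_d].
set B := [set (c * Phi k)%g | k in 'I_d].
rewrite (bigID (mem A)) /=.
have -> : \sum_(i | i \in A) h i = \sum_(i in A) h i by [].
rewrite big_imset /=; last by move=> x y _ _; apply: inj.
congr (_ + _).
rewrite (eq_bigl (mem B)); last first.
  move=> x /=; apply/idP/idP.
    move=> nA; have [k [xk|xk]] := cov x.
      by rewrite xk mem_imset in nA.
    by apply/imsetP; exists k.
  case/imsetP => k _ ->; apply/imsetP => -[l _ e].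
  by move: (ndisj k l); rewrite e eqxx.
have -> : \sum_(i | i \in B) h i = \sum_(i in B) h i by [].
rewrite big_imset //= => x y _ _ /mulgI; apply: inj.
Qed.
End S.

Section M.
Variables (gT : finGroupType) (c : gT) (d : nat) (Phi : 'I_d -> gT).
Hypothesis hPhi : CM_type c Phi.
Hypothesis comm : forall x y : gT, (x * y = y * x)%g.
Hypothesis cc : (c * c = 1)%g.
Variable f : gT -> algC.
Hypothesis hf : odd_fun c f.

Let G := [set: gT]%G.

Lemma abG : abelian G.
Proof. by apply/centsP => x _ y _; apply: comm. Qed.

Lemma lin (i : Iirr G) : 'chi_i \is a linear_char.
Proof. by move/char_abelianP: abG. Qed.

Lemma chiM (i : Iirr G) x y : 'chi_i (x * y)%g = 'chi_i x * 'chi_i y.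
Proof. by rewrite (lin_charM (lin i)) ?inE. Qed.

Lemma chic (i : Iirr G) : ('chi_i c == 1) || ('chi_i c == -1).
Proof. by rewrite -sqrf_eq1 expr2 -chiM cc (lin_char1 (lin i)). Qed.

Lemma cardG : (#|gT|%:R : algC) = d%:R + d%:R.
Proof.
have := @sumCM _ _ _ _ hPhi (fun _ => (1 : algC)).
by rewrite !sumr_const card_ord => ->.
Qed.

Lemma orth2 x y : \sum_(i : Iirr G) 'chi_i x * ('chi_i y)^* = #|gT|%:R *+ (x == y).
Proof.
rewrite second_orthogonality_relation ?inE //.
have -> : 'C_G[x]%g = G.
  by apply/setP => z; rewrite in_setI cent1E comm eqxx !inE.
have -> : (x \in y ^: G)%g = (x == y).
  apply/idP/eqP; last by move=> ->; apply: class_refl.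
  by case/imsetP => z _ ->; rewrite conjgE (comm y z) mulKg.
by rewrite cardsT.
Qed.

Lemma two_neq0 : (2%:R : algC) != 0.
Proof. by have := @pnatr_eq0 algC 2; move=> ->. Qed.

Lemma half_eq (a b : algC) : a + a = b + b -> a = b.
Proof.
move=> H; have: (a - b) * 2%:R = 0.
  by rewrite mulr_natr mulr2n addrACA H -opprD subrr.
move/eqP; rewrite mulf_eq0 (negbTE two_neq0) orbF subr_eq0.
by move/eqP.
Qed.

Lemma step1 (i : Iirr G) k : 'chi_i c = -1 ->
  \sum_l ('chi_i (Phi l))^* * f ((Phi k)^-1 * Phi l)%g =
  ('chi_i (Phi k))^* * d%:R * dotG f (fun x => 'chi_i x).
Proof.
move=> oi.
pose h := fun x => ('chi_i x)^* * f ((Phi k)^-1 * x)%g.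
have hc x : h (c * x)%g = h x.
  rewrite /h chiM oi mulN1r rmorphN.
  by rewrite mulgA (comm _ c) -mulgA hf mulrNN.
have := @sumCM _ _ _ _ hPhi h.
have E2 : \sum_l h (c * Phi l)%g = \sum_l h (Phi l) by apply: eq_bigr => l _; apply: hc.
rewrite E2.
rewrite (reindex_inj (mulgI (Phi k))) /= => H.
apply: half_eq; rewrite -[LHS]H /dotG /h.
transitivity (('chi_i (Phi k))^* * \sum_g f g * ('chi_i g)^*).
  rewrite big_distrr; apply: eq_bigr => j _.
  by rewrite mulKg chiM rmorphM -mulrA [f j * _]mulrC.
rewrite -mulrDl -mulrDr -cardG -mulrA (mulrA #|gT|%:R) mulfV ?mul1r //.
by rewrite pnatr_eq0 -lt0n; apply/card_gt0P; exists 1%g.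
Qed.

Lemma n1 : ((1 : algC) == -1) = false.
Proof. apply/negbTE; rewrite -addr_eq0; exact: two_neq0. Qed.

Lemma dbl (a : algC) : 2%:R^-1 * (a + a) = a.
Proof.
change (a + a) with (a *+ 2); rewrite -(mulr_natl a 2) mulrA mulVf ?mul1r //.
exact: two_neq0.
Qed.

Lemma step2 j k : \sum_(i : Iirr G | 'chi_i c == -1) 'chi_i (Phi j) * ('chi_i (Phi k))^*
  = d%:R * (j == k)%:R.
Proof.
case: hPhi => inj [ndisj cov].
rewrite big_mkcond /=.
transitivity (\sum_(i : Iirr G) (2%:R^-1 * ('chi_i (Phi j) * ('chi_i (Phi k))^*
     - 'chi_i (c * Phi j)%g * ('chi_i (Phi k))^*))).
  apply: eq_bigr => i _; rewrite chiM; case/orP: (chic i) => /eqP ->.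
    by rewrite n1 mul1r subrr mulr0.
  by rewrite eqxx mulN1r mulNr opprK dbl.
rewrite -big_distrr /= sumrB !orth2 cardG (inj_eq inj) (negbTE (ndisj j k)) subr0.
by case: (j == k); rewrite ?dbl ?mulr1 ?mulr0.
Qed.

Hypothesis hchi : forall i : Iirr G, 'chi_i c = -1 -> dotG (fun x => 'chi_i x) f != 0.

Lemma Dne0 (i : Iirr G) : 'chi_i c = -1 -> dotG f (fun x => 'chi_i x) != 0.
Proof.
move=> oi; have := hchi i oi; apply: contra => /eqP H.
rewrite -conjC_eq0 -H /dotG rmorphM fmorphV rmorph_nat rmorph_sum /=.
by apply/eqP; congr (_ * _); apply: eq_bigr => g _; rewrite rmorphM /= conjCK mulrC.
Qed.

Lemma S_M (i : Iirr G) (X : 'cV[algC]_d) : 'chi_i c = -1 ->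
  \sum_l ('chi_i (Phi l))^* * (Mf Phi f *m X) l ord0 =
  d%:R * dotG f (fun x => 'chi_i x) * \sum_l ('chi_i (Phi l))^* * X l ord0.
Proof.
move=> oi.
under eq_bigr => l _ do rewrite mxE big_distrr.
rewrite exchange_big big_distrr /=; apply: eq_bigr => k _.
transitivity ((\sum_l ('chi_i (Phi l))^* * f ((Phi k)^-1 * Phi l)%g) * X k ord0).
  by rewrite big_distrl; apply: eq_bigr => l _; rewrite /Mf mxE mulrA.
rewrite step1 // -!mulrA [LHS]mulrCA; congr (_ * _); rewrite [LHS]mulrCA; congr (_ * _); exact: mulrCA.
Qed.

Definition RHSf (Y : 'cV[algC]_d) j :=
  \sum_(i : Iirr G | 'chi_i c == -1)
        'chi_i (Phi j) * (\sum_l ('chi_i (Phi l))^* * Y l ord0) /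
        ((d ^ 2)%:R * dotG f (fun x => 'chi_i x)).

Lemma dne0 : (d%:R : algC) != 0.
Proof.
case: hPhi => _ [_ cov]; case: (cov 1%g) => k _.
by rewrite pnatr_eq0 -lt0n; apply: leq_ltn_trans (ltn_ord k).
Qed.

Lemma solve (X : 'cV[algC]_d) j : X j ord0 = RHSf (Mf Phi f *m X) j.
Proof.
rewrite /RHSf.
transitivity (d%:R^-1 * \sum_(i : Iirr G | 'chi_i c == -1)
   'chi_i (Phi j) * \sum_l ('chi_i (Phi l))^* * X l ord0); last first.
  rewrite big_distrr /=; apply: eq_bigr => i /eqP oi.
  rewrite S_M // natrX expr2 invfM.
  have hD := Dne0 i oi; have hd := dne0.
  move: (dotG f _) hD (\sum_(l < d) _) ('chi_i (Phi j)) => D hD S a.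
  field; rewrite hD hd //.
rewrite (eq_bigr (fun i => \sum_l 'chi_i (Phi j) * ('chi_i (Phi l))^* * X l ord0)); last first.
  by move=> i _; rewrite big_distrr /=; apply: eq_bigr => l _; rewrite mulrA.
rewrite exchange_big /=.
under eq_bigr => l _ do rewrite -big_distrl /= step2.
rewrite (bigD1 j) //= big1 ?addr0 ?eqxx ?mulr1 ?mulKf ?dne0 //.
by move=> l /negbTE; rewrite eq_sym => ->; rewrite mulr0 mul0r.
Qed.

Lemma mainM : Mf Phi f \in unitmx /\
  forall X Y, Mf Phi f *m X = Y -> forall j, X j ord0 = RHSf Y j.
Proof.
split; last by move=> X Y <- j; apply: solve.
pose N := \matrix_(j, l) \sum_(i : Iirr G | 'chi_i c == -1)
   'chi_i (Phi j) * ('chi_i (Phi l))^* / ((d ^ 2)%:R * dotG f (fun x => 'chi_i x)).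
have NY Y j : (N *m Y) j ord0 = RHSf Y j.
  rewrite mxE /RHSf; under eq_bigr do rewrite mxE big_distrl.
  rewrite exchange_big; apply: eq_bigr => i _ /=.
  rewrite big_distrr big_distrl /=; apply: eq_bigr => l _.
  by rewrite [in RHS]mulrA [in RHS]mulrAC.
have NM : N *m Mf Phi f = 1%:M.
  apply/matrixP => j k.
  transitivity ((col k (N *m Mf Phi f)) j ord0); first by rewrite [in RHS]mxE.
  by rewrite colE -mulmxA NY -solve !mxE eqxx andbT.
by case: (mulmx1_unit NM).
Qed.

End M.

Theorem lemma5p4 (n : nat) (hn : (3 <= n)%N)
  (Phi : 'I_(totient n %/ 2) -> Gal_cyc n)
  (hPhi : CM_type (cconj n) Phi)
  (f : Gal_cyc n -> algC) (hf : odd_fun (cconj n) f)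
  (hchi : forall i : Iirr [set: Gal_cyc n]%G,
      'chi_i (cconj n) = -1 -> dotG (fun x => 'chi_i x) f != 0) :
  Mf Phi f \in unitmx /\
  forall X Y : 'cV[algC]_(totient n %/ 2), Mf Phi f *m X = Y ->
    forall j, X j ord0 =
      \sum_(i : Iirr [set: Gal_cyc n]%G | 'chi_i (cconj n) == -1)
        'chi_i (Phi j) * (\sum_l ('chi_i (Phi l))^* * Y l ord0) /
        (((totient n %/ 2) ^ 2)%:R * dotG f (fun x => 'chi_i x)).

Proof.
have comm : forall x y : Gal_cyc n, (x * y = y * x)%g.
  by move=> x y; apply: val_inj; rewrite !FinRing.val_unitM mulrC.
have cc : (cconj n * cconj n = 1)%g.
  by apply: val_inj; rewrite FinRing.val_unitM FinRing.val_unit1 /= mulrNN mulr1.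
have := @mainM _ _ _ _ hPhi comm cc _ hf hchi. by [].
Qed.
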